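(* Let $\rho$ be a qubit state and define the concatenation protocol as follows. Set $\sigma_{(0)}=\rho$. Given $\sigma_{(m)}$ with $p^{(m)}_{00}=\langle0|\sigma_{(m)}|0\rangle$, let $U_m$ be the two-qubit unitary acting as the identity on $|00\rangle,|11\rangle$ and as the rotation $|01\rangle\mapsto\cos\theta_m|01\rangle+\sin\theta_m|10\rangle$, $|10\rangle\mapsto-\sin\theta_m|01\rangle+\cos\theta_m|10\rangle$ with $\cos\theta_m=1/\sqrt{1+(2p^{(m)}_{00}-1)^2}$, $\sin\theta_m=(2p^{(m)}_{00}-1)/\sqrt{1+(2p^{(m)}_{00}-1)^2}$, and set $\sigma_{(m+1)}=\mathrm{tr}_B\big[U_m(\sigma_{(m)}\otimes\sigma_{(m)})U_m^\dagger\big]$ (so $\sigma_{(m)}$ consumes $2^m$ copies of $\rho$). Then for every $m$, $$M^{(1)}(\sigma_{(m)})\le\sqrt{2\,\mathrm{tr}(\rho^2)-1}.$$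
   Context: Qubit basis $\{|0\rangle,|1\rangle\}$ is the eigenbasis of $L=|1\rangle\langle1|$. The coherence measure is $M^{(1)}(\sigma):=\|\,|1\rangle\langle1|\sigma|0\rangle\langle0|\,\|_1=|\langle0|\sigma|1\rangle|$. The unitaries $U_m$ commute with $L\otimes\mathbb{I}+\mathbb{I}\otimes L$ and are the optimal two-copy coherence-concentrating unitaries for $\sigma_{(m)}$. *)

(* Defs.v *)
From HB Require Import structures.
From mathcomp Require Import all_boot all_order all_algebra.
From mathcomp Require Import mxtens.
Set Implicit Arguments. Unset Strict Implicit. Unset Printing Implicit Defensive.
Import Order.TTheory GRing.Theory Num.Theory.
Local Open Scope ring_scope.

(* Scalars: an arbitrary numClosedFieldType C (e.g. algC, or R[i] for R real
   closed); qubit operators are 'M[C]_2 in the basis {|0>,|1>} (ord0, ord_max),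
   two-qubit operators are 'M[C]_(2*2) with |ab> = mxtens_index (a, b), so that
   (A *t B) is the Kronecker product A (x) B. *)

Section Qubit.
Variable C : numClosedFieldType.

Definition adjmx m n (A : 'M[C]_(m, n)) : 'M[C]_(n, m) := (map_mx Num.conj A)^T.

Definition is_state n (rho : 'M[C]_n) : Prop :=
  adjmx rho = rho /\
  (forall v : 'cV[C]_n, 0 <= (adjmx v *m rho *m v) 0 0) /\
  \tr rho = 1.

Definition q0 : 'I_2 := ord0.
Definition q1 : 'I_2 := ord_max.
Definition ket (a b : 'I_2) : 'I_(2 * 2) := mxtens_index (a, b).

Definition ptraceB (X : 'M[C]_(2 * 2)) : 'M[C]_2 :=
  \matrix_(i, j) \sum_(k < 2) X (ket i k) (ket j k).

Definition Urot (c s : C) : 'M[C]_(2 * 2) :=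
  delta_mx (ket q0 q0) (ket q0 q0) + delta_mx (ket q1 q1) (ket q1 q1)
  + c *: delta_mx (ket q0 q1) (ket q0 q1) + s *: delta_mx (ket q1 q0) (ket q0 q1)
  - s *: delta_mx (ket q0 q1) (ket q1 q0) + c *: delta_mx (ket q1 q0) (ket q1 q0).

Definition cos_theta (p00 : C) : C := 1 / sqrtC (1 + (2 * p00 - 1) ^+ 2).
Definition sin_theta (p00 : C) : C := (2 * p00 - 1) / sqrtC (1 + (2 * p00 - 1) ^+ 2).

Definition U_of (sigma : 'M[C]_2) : 'M[C]_(2 * 2) :=
  Urot (cos_theta (sigma q0 q0)) (sin_theta (sigma q0 q0)).

Definition concat_step (sigma : 'M[C]_2) : 'M[C]_2 :=
  ptraceB (U_of sigma *m (sigma *t sigma) *m adjmx (U_of sigma)).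

Definition sigma_m (rho : 'M[C]_2) (m : nat) : 'M[C]_2 := iter m concat_step rho.

Definition M1 (sigma : 'M[C]_2) : C := `| sigma q0 q1 |.

End Qubit.

(* Main.v *)
Require Import Defs.
From HB Require Import structures.
From mathcomp Require Import all_boot all_order all_algebra.
From mathcomp Require Import mxtens.
From mathcomp Require Import ring lra.
Import Order.TTheory GRing.Theory Num.Theory.
Local Open Scope ring_scope.

Section S.
Variable C : numClosedFieldType.

Lemma sum2 (F : 'I_2 -> C) : \sum_(k < 2) F k = F q0 + F q1.
Proof.
rewrite big_ord_recr big_ord_recr big_ord0 /= add0r.
by congr (F _ + F _); apply: val_inj.
Qed.

Lemma sum4 (F : 'I_(2*2) -> C) :
  \sum_(k < 2*2) F k = F (ket q0 q0) + F (ket q0 q1) + F (ket q1 q0) + F (ket q1 q1).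
Proof.
rewrite !big_ord_recr big_ord0 /= add0r.
by congr (F _ + F _ + F _ + F _); apply: val_inj.
Qed.

Lemma tensE (A B : 'M[C]_2) i j k l :
  (A *t B) (ket i j) (ket k l) = A i k * B j l.
Proof. exact: tensmxE. Qed.


Lemma ketE a b c d : (mxtens_index (a, b) == mxtens_index (c, d) :> 'I_(2*2)) = (a == c) && (b == d).
Proof. by rewrite (can_eq (@mxtens_indexK 2 2)) xpair_eqE. Qed.

Lemma q01 : (q0 == q1) = false. Proof. by []. Qed.
Lemma q10 : (q1 == q0) = false. Proof. by []. Qed.


Definition stepU (c sn : C) (s : 'M[C]_2) :=
  ptraceB (Urot c sn *m (s *t s) *m adjmx (Urot c sn)).

Lemma concat_stepE s : concat_step s = stepU (cos_theta (s q0 q0)) (sin_theta (s q0 q0)) s.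
Proof. by []. Qed.

Ltac simp_step :=
  rewrite /stepU /ptraceB mxE sum2 !mxE !sum4 !mxE !sum4 /Urot !mxE /ket !mxtens_indexK !ketE ?eqxx ?q01 ?q10 /=;
  rewrite ?(rmorphD, rmorphB, rmorphM, rmorph_nat, rmorph0, rmorph1, rmorphN).

Lemma step01 (c sn : C) (s : 'M[C]_2) : c^* = c -> sn^* = sn ->
  stepU c sn s q0 q1 = s q0 q1 * (s q0 q0 * (c + sn) + s q1 q1 * (c - sn)).
Proof. move=> hc hs.
have hc' : Num.Num_conj__canonical__GRing_RMorphism C c = c by exact: hc.
have hs' : Num.Num_conj__canonical__GRing_RMorphism C sn = sn by exact: hs.
simp_step. rewrite hc' hs'. ring. Qed.
Lemma step10 (c sn : C) (s : 'M[C]_2) : c^* = c -> sn^* = sn ->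
  stepU c sn s q1 q0 = s q1 q0 * (s q0 q0 * (c + sn) + s q1 q1 * (c - sn)).
Proof. move=> hc hs.
have hc' : Num.Num_conj__canonical__GRing_RMorphism C c = c by exact: hc.
have hs' : Num.Num_conj__canonical__GRing_RMorphism C sn = sn by exact: hs.
simp_step. rewrite hc' hs'. ring. Qed.
Lemma step00 (c sn : C) (s : 'M[C]_2) : c^* = c -> sn^* = sn ->
  stepU c sn s q0 q0 = s q0 q0 * s q0 q0 + s q0 q0 * s q1 q1 * (c^+2 + sn^+2) - 2 * c * sn * (s q0 q1 * s q1 q0).
Proof. move=> hc hs.
have hc' : Num.Num_conj__canonical__GRing_RMorphism C c = c by exact: hc.
have hs' : Num.Num_conj__canonical__GRing_RMorphism C sn = sn by exact: hs.
simp_step. rewrite hc' hs'. ring. Qed.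
Lemma step11 (c sn : C) (s : 'M[C]_2) : c^* = c -> sn^* = sn ->
  stepU c sn s q1 q1 = s q1 q1 * s q1 q1 + s q0 q0 * s q1 q1 * (c^+2 + sn^+2) + 2 * c * sn * (s q0 q1 * s q1 q0).
Proof. move=> hc hs.
have hc' : Num.Num_conj__canonical__GRing_RMorphism C c = c by exact: hc.
have hs' : Num.Num_conj__canonical__GRing_RMorphism C sn = sn by exact: hs.
simp_step. rewrite hc' hs'. ring. Qed.

Lemma key (x B R : C) : x \is Num.real -> 0 <= B -> x ^+ 2 + 4 * B <= R -> R <= 1 ->
  (x - 4 * x * B / (1 + x ^+ 2)) ^+ 2 + 4 * (B * (1 + x ^+ 2)) <= R.
Proof.
move=> hx hB hR hR1.
have hx2 : 0 <= x ^+ 2 by rewrite -realEsqr.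
have hD : 0 < 1 + x ^+ 2 by apply: ltr_wpDr => //; exact: ltr01.
have hD0 : 1 + x ^+ 2 != 0 by rewrite gt_eqF.
have -> : (x - 4 * x * B / (1 + x ^+ 2)) ^+ 2 + 4 * (B * (1 + x ^+ 2)) =
   (x ^+ 2 + 4 * B) + x ^+ 2 * (4 * B / (1 + x ^+ 2)) * ((4 * B + (x ^+ 2) ^+ 2 - 1) / (1 + x ^+ 2)).
  by field.
apply: le_trans (hR); rewrite gerDl.
have h4B : 0 <= 4 * B by rewrite mulr_ge0 // ler0n.
apply: mulr_ge0_le0; first by rewrite mulr_ge0 // divr_ge0 // ltW.
apply: mulr_le0_ge0; last by rewrite invr_ge0 ltW.
rewrite subr_le0.
have hx21 : x ^+ 2 <= 1.
  apply: le_trans (hR1); apply: le_trans (hR); by rewrite lerDl.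
apply: le_trans (hR1); apply: le_trans (hR).
rewrite [x ^+ 2 + _]addrC lerD2l.
by have := ler_wpM2l hx2 hx21; rewrite mulr1 -expr2.
Qed.

Definition Inv (R : C) (s : 'M[C]_2) :=
  [/\ s q0 q0 \is Num.real, s q1 q1 = 1 - s q0 q0, s q1 q0 = (s q0 q1)^*
    & (2 * s q0 q0 - 1) ^+ 2 + 4 * `|s q0 q1| ^+ 2 <= R].

Lemma inv_step R s : R <= 1 -> Inv R s -> Inv R (concat_step s).
Proof.
move=> hR1 [ha hd hb hR].
rewrite concat_stepE.
move: ha hd hb hR; set a := s q0 q0; set b := s q0 q1 => ha hd hb hR.
have hx : 2 * a - 1 \is Num.real by rewrite rpredB ?rpredM ?realn ?rpred1.
move: hR; rewrite /cos_theta /sin_theta -/a.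
move: hx; set x := 2 * a - 1 => hx hR.
have hx2 : 0 <= x ^+ 2 by rewrite -realEsqr.
have hD : 0 < 1 + x ^+ 2 by apply: ltr_wpDr => //; exact: ltr01.
set q := sqrtC (1 + x ^+ 2).
have hq : 0 < q by rewrite sqrtC_gt0.
have hq0 : q != 0 by rewrite gt_eqF.
have hqD : q ^+ 2 = 1 + x ^+ 2 by rewrite sqrtCK.
have hqr : q \is Num.real by exact: gtr0_real.
have hcr : 1 / q \is Num.real by rewrite rpredM ?rpred1 ?rpredV.
have hsr : x / q \is Num.real by rewrite rpredM ?rpredV.
have hc := conj_Creal hcr. have hs := conj_Creal hsr.
have e01 := step01 _ _ s hc hs. have e10 := step10 _ _ s hc hs.
have e00 := step00 _ _ s hc hs. have e11 := step11 _ _ s hc hs.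
have hB : b * b^* = `|b| ^+ 2 by rewrite normCK.
have ecs : 1 / q * (x / q) = x / (1 + x ^+ 2).
  by rewrite -hqD; field.
have ecs2 : (1 / q) ^+ 2 + (x / q) ^+ 2 = 1.
  have -> : (1 / q) ^+ 2 + (x / q) ^+ 2 = (1 + x ^+ 2) / q ^+ 2 by field.
  by rewrite -hqD divff // expf_neq0.
have eq : a * (1 / q + x / q) + (1 - a) * (1 / q - x / q) = q.
  have -> : a * (1 / q + x / q) + (1 - a) * (1 / q - x / q) = (1 + x * x) / q by rewrite /x; field.
  by rewrite -expr2 -hqD expr2 mulfK.
set S := stepU _ _ s.
have E00 : S q0 q0 = a - 2 * x * `|b| ^+ 2 / (1 + x ^+ 2).
  rewrite /S [stepU _ _ s q0 q0]e00 -/a -/b hd hb hB ecs2 -[2 * (1/q) * (x/q)]mulrA ecs.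
  by field; rewrite gt_eqF.
have E11 : S q1 q1 = 1 - (a - 2 * x * `|b| ^+ 2 / (1 + x ^+ 2)).
  rewrite /S [stepU _ _ s q1 q1]e11 -/a -/b hd hb hB ecs2 -[2 * (1/q) * (x/q)]mulrA ecs.
  by field; rewrite gt_eqF.
have E01 : S q0 q1 = b * q.
  by rewrite /S [stepU _ _ s q0 q1]e01 -/a -/b hd eq.
have E10 : S q1 q0 = b^* * q.
  by rewrite /S [stepU _ _ s q1 q0]e10 -/a -/b hd hb eq.
split.
- have hDr : 1 + x ^+ 2 \is Num.real := gtr0_real hD.
  have hBr : `|b| ^+ 2 \is Num.real by rewrite rpredX // normr_real.
  by rewrite E00 rpredB // rpredM ?rpredV // rpredM // rpredM // realn.
- by rewrite E11 E00.
- have hm : (b * q)^* = b^* * q^* by exact: rmorphM.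
  by rewrite E10 E01 hm (conj_Creal hqr).
- rewrite E00 E01 normrM (ger0_norm (ltW hq)) exprMn hqD.
  have -> : 2 * (a - 2 * x * `|b| ^+ 2 / (1 + x ^+ 2)) - 1 = x - 4 * x * `|b| ^+ 2 / (1 + x ^+ 2).
    by rewrite /x; field; rewrite -/x gt_eqF.
  apply: key => //; exact: exprn_ge0.
Qed.

Definition colv (u w : C) : 'cV[C]_2 := \matrix_(i < 2, j < 1) (if i == q0 then u else w).

Lemma qform (rho : 'M[C]_2) u w :
  (adjmx (colv u w) *m rho *m colv u w) 0 0 =
  u^* * (rho q0 q0 * u + rho q0 q1 * w) + w^* * (rho q1 q0 * u + rho q1 q1 * w).
Proof.
rewrite /adjmx !mxE sum2 !mxE !sum2 !mxE eqxx q10 /=.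
ring.
Qed.

Lemma bound_final R (s : 'M[C]_2) : Inv R s -> M1 s <= sqrtC R.
Proof.
move=> [ha hd hb hR].
have hx : 2 * s q0 q0 - 1 \is Num.real by rewrite rpredB ?rpredM ?realn ?rpred1.
have hx2 : 0 <= (2 * s q0 q0 - 1) ^+ 2 by rewrite -realEsqr.
have hB : 0 <= `|s q0 q1| ^+ 2 by rewrite exprn_ge0.
have h1 : `|s q0 q1| ^+ 2 <= R.
  apply: le_trans (hR); apply: le_trans (_ : 4 * `|s q0 q1| ^+ 2 <= _).
    by rewrite -subr_ge0 -{2}[`|s q0 q1| ^+ 2]mul1r -mulrBl mulr_ge0 // subr_ge0 ler1n.
  by rewrite addrC lerDl.
rewrite /M1 -(sqrCK (normr_ge0 (s q0 q1))) ler_sqrtC // nnegrE //.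
exact: le_trans h1.
Qed.

Lemma init (rho : 'M[C]_2) : is_state rho ->
  Inv (2 * \tr (rho *m rho) - 1) rho /\ 2 * \tr (rho *m rho) - 1 <= 1.
Proof.
move=> [hadj [hpos htr]].
have hent : forall i j, rho i j = (rho j i)^*.
  by move=> i j; rewrite -{1}hadj !mxE.
have ha : rho q0 q0 \is Num.real by apply/CrealP; rewrite -hent.
have hd : rho q1 q1 = 1 - rho q0 q0.
  by move: htr; rewrite /mxtrace sum2 => <-; ring.
have hb : rho q1 q0 = (rho q0 q1)^* by rewrite hent.
have hT : \tr (rho *m rho) = rho q0 q0 * rho q0 q0 + rho q0 q1 * rho q1 q0
    + rho q1 q0 * rho q0 q1 + rho q1 q1 * rho q1 q1.
  by rewrite /mxtrace sum2 !mxE !sum2; ring.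
move: ha hd hb hT; set a := rho q0 q0; set b := rho q0 q1 => ha hd hb hT.
have hac := conj_Creal ha.
have hB : b * b^* = `|b| ^+ 2 by rewrite normCK.
have hR : 2 * \tr (rho *m rho) - 1 = (2 * a - 1) ^+ 2 + 4 * `|b| ^+ 2.
  rewrite hT hd hb -hB; ring.
have p1 := hpos (colv b (- a)).
have p2 := hpos (colv (1 - a) (- b^*)).
rewrite qform -/a -/b hd hb in p1.
rewrite qform -/a -/b hd hb in p2.
have hN : forall z : C, (- z)^* = - z^* by move=> z; exact: rmorphN.
have hS : (1 - a)^* = 1 - a by apply: conj_Creal; rewrite rpredB ?rpred1.
have hcc : (b^*)^* = b by exact: conjCK.
rewrite hN hac in p1. rewrite hN hS hcc in p2.
have hsum : 0 <= a * (1 - a) - `|b| ^+ 2.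
  have -> : a * (1 - a) - `|b| ^+ 2 =
     (b^* * (a * b + b * - a) + - a * (b^* * b + (1 - a) * - a)) +
     ((1 - a) * (a * (1 - a) + b * - b^*) + - b * (b^* * (1 - a) + (1 - a) * - b^*)).
    by rewrite -hB; ring.
  exact: addr_ge0.
split; first split => //; rewrite hR //.
rewrite -subr_ge0.
have -> : 1 - ((2 * a - 1) ^+ 2 + 4 * `|b| ^+ 2) = 4 * (a * (1 - a) - `|b| ^+ 2) by ring.
by rewrite mulr_ge0 // ler0n.
Qed.

Lemma all_inv (rho : 'M[C]_2) : is_state rho ->
  forall m, Inv (2 * \tr (rho *m rho) - 1) (sigma_m rho m).
Proof.
move=> hs; have [h0 h1] := init rho hs.
elim=> [|m IH] //=.
exact: inv_step.
Qed.
End S.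

Theorem mainTheorem3 (C : numClosedFieldType) (rho : 'M[C]_2) :
  is_state rho ->
  forall m : nat, M1 (sigma_m rho m) <= sqrtC (2 * \tr (rho *m rho) - 1).
Proof.
move=> hs m; apply: bound_final; exact: all_inv.
Qed.
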